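(* Let $R$ be a left arithmetical ring, and let $R'$ be any ring that is Morita equivalent to $R$. Then $R'$ is a left arithmetical ring.
   Context: A ring $R$ is called left arithmetical if: (a) every simple left $R$-module has finitely many elements; (b) every simple left $R$-module is finitely presented; (c) for every positive integer $n$, there are only finitely many isomorphism classes of simple left $R$-modules with exactly $n$ elements. *)

(* Defs.v *)
From HB Require Import structures.
From mathcomp Require Import all_boot all_order all_algebra.
Set Implicit Arguments. Unset Strict Implicit. Unset Printing Implicit Defensive.
Import GRing.Theory.
Local Open Scope ring_scope.

(* Left R-modules are MathComp's [lmodType R]; R-linear maps are
   [{linear M -> N}] (scaling on the left). Rings are unital, possibly zero. *)

Section ModuleNotions.
Variable R : pzRingType.

Definition submodule (M : lmodType R) (S : M -> Prop) : Prop :=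
  S 0 /\ (forall x y, S x -> S y -> S (x + y)) /\
  (forall (a : R) x, S x -> S (a *: x)).

Definition simple_module (M : lmodType R) : Prop :=
  (exists x : M, x <> 0) /\
  forall S : M -> Prop, submodule S ->
    (forall x, S x -> x = 0) \/ (forall x, S x).

Definition has_card (M : lmodType R) (n : nat) : Prop :=
  exists s : seq M, uniq s /\ size s = n /\ forall x : M, x \in s.

Definition finite_module (M : lmodType R) : Prop :=
  exists s : seq M, forall x : M, x \in s.

(* Finitely presented: an exact sequence R^m -> R^n -> M -> 0
   (free modules of finite rank realised as row vectors 'rV[R]_n). *)
Definition finitely_presented (M : lmodType R) : Prop :=
  exists (n m : nat) (f : {linear 'rV[R]_n -> M}) (g : {linear 'rV[R]_m -> 'rV[R]_n}),
    (forall y : M, exists x, f x = y) /\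
    (forall x, f x = 0 <-> exists z, x = g z).

Definition mod_iso (M N : lmodType R) : Prop :=
  exists f : {linear M -> N}, bijective f.

Definition left_arithmetical : Prop :=
  (forall M : lmodType R, simple_module M -> finite_module M) /\
  (forall M : lmodType R, simple_module M -> finitely_presented M) /\
  (forall n : nat, (0 < n)%N ->
     exists (k : nat) (Ms : nat -> lmodType R),
       forall M : lmodType R, simple_module M -> has_card M n ->
         exists i, (i < k)%N /\ mod_iso M (Ms i)).

End ModuleNotions.

(* Functors between categories of left modules (objects: lmodType, morphisms:
   linear maps, compared extensionally). *)
Record mod_functor (R S : pzRingType) := ModFunctor {
  fobj : lmodType R -> lmodType S;
  fmap : forall M N : lmodType R, {linear M -> N} -> {linear fobj M -> fobj N};
  fmap_id : forall (M : lmodType R) (f : {linear M -> M}),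
      f =1 id -> fmap f =1 id;
  fmap_comp : forall (M N P : lmodType R) (f : {linear M -> N})
      (g : {linear N -> P}) (h : {linear M -> P}),
      h =1 g \o f -> fmap h =1 fmap g \o fmap f
}.

Definition nat_iso_id (R S : pzRingType) (F : mod_functor R S) (G : mod_functor S R) : Prop :=
  exists eta : forall M : lmodType R, {linear M -> fobj G (fobj F M)},
    (forall M, bijective (eta M)) /\
    (forall (M N : lmodType R) (f : {linear M -> N}),
        fmap G (fmap F f) \o eta M =1 eta N \o f).

Definition morita_equivalent (R S : pzRingType) : Prop :=
  exists (F : mod_functor R S) (G : mod_functor S R),
    nat_iso_id F G /\ nat_iso_id G F.

(* Main.v *)
Require Import Defs.
From HB Require Import structures.
From mathcomp Require Import all_boot all_order all_algebra.
From mathcomp Require Import boolp.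
From Stdlib Require List.
Set Implicit Arguments. Unset Strict Implicit. Unset Printing Implicit Defensive.
Import GRing.Theory.
Local Open Scope ring_scope.

Definition linmk (R : pzRingType) (U V : lmodType R) (f : U -> V) (H : linear f) : {linear U -> V} :=
  HB.pack f (GRing.isLinear.Build R U V *:%R f H).

Lemma linmkE (R : pzRingType) (U V : lmodType R) (f : U -> V) (H : linear f) x : linmk H x = f x.
Proof. by []. Qed.

Definition idL (R : pzRingType) (U : lmodType R) : {linear U -> U} := @idfun U.
Definition compL (R : pzRingType) (U V W : lmodType R) (f : {linear V -> W}) (g : {linear U -> V}) : {linear U -> W} := f \o g.

Section Quot.
Variables (R : pzRingType) (Y : lmodType R) (N : Y -> Prop).
Hypothesis HN : submodule N.

Lemma N0 : N 0. Proof. by case: HN => H _. Qed.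
Lemma ND a b : N a -> N b -> N (a + b). Proof. by case: HN => _ [H1 H2]; auto. Qed.
Lemma NZ r a : N a -> N (r *: a). Proof. by case: HN => _ [H1 H2]; auto. Qed.
Lemma NN a : N a -> N (- a). Proof. by move=> /(NZ (-1)); rewrite scaleN1r. Qed.
Lemma NB a b : N a -> N b -> N (a - b). Proof. by move=> ? ?; apply: ND => //; apply: NN. Qed.

Definition qrel (a : Y) : pred Y := fun b => `[< N (a - b) >].
Lemma qrel_ex a : exists b, qrel a b.
Proof. by exists a; apply/asboolP; rewrite subrr; apply: N0. Qed.
Definition canon (a : Y) : Y := xchoose (qrel_ex a).
Lemma canonP a : N (a - canon a).
Proof. exact/asboolP/(xchooseP (qrel_ex a)). Qed.
Lemma canon_eq a b : N (a - b) -> canon a = canon b.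
Proof.
move=> Hab; apply: eq_xchoose => z; apply/asboolP/asboolP => H.
  suff -> : b - z = (a - z) - (a - b) by apply: NB.
  by rewrite opprB [RHS]addrC addrA subrK.
suff -> : a - z = (a - b) + (b - z) by apply: ND.
by rewrite addrA subrK.
Qed.
Lemma canon_idem a : canon (canon a) = canon a.
Proof. apply: canon_eq. have := NN (canonP a); by rewrite opprB. Qed.
Lemma canon0 : N (canon 0) .
Proof. have := NN (canonP 0); by rewrite sub0r opprK. Qed.

Definition qT := {y : Y | canon y == y}.
HB.instance Definition _ := [isSub for (@sval Y (fun y => canon y == y)) : qT -> Y].
HB.instance Definition _ := [Choice of qT by <:].

Lemma canon_idemb y : canon (canon y) == canon y. Proof. by rewrite canon_idem. Qed.
Definition mkq (y : Y) : qT := exist _ (canon y) (canon_idemb y).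
Lemma mkqE a b : N (a - b) -> mkq a = mkq b.
Proof. by move=> H; apply: val_inj => /=; apply: canon_eq. Qed.
Lemma mkq_canon a : N (val (mkq a) - a).
Proof. have := NN (canonP a); by rewrite opprB. Qed.
Lemma valK (x : qT) : mkq (val x) = x.
Proof. apply: val_inj => /=; exact/eqP/(valP x). Qed.
Lemma mkqDl a b : mkq (val (mkq a) + b) = mkq (a + b).
Proof. apply: mkqE; suff -> : val (mkq a) + b - (a + b) = val (mkq a) - a by apply: mkq_canon.
by rewrite opprD addrACA subrr addr0. Qed.
Lemma mkqDr a b : mkq (a + val (mkq b)) = mkq (a + b).
Proof. by rewrite addrC mkqDl addrC. Qed.
Lemma mkqN a : mkq (- val (mkq a)) = mkq (- a).
Proof. apply: mkqE; suff -> : - val (mkq a) - - a = - (val (mkq a) - a) by apply/NN/mkq_canon.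
by rewrite opprB opprK addrC. Qed.
Lemma mkqZ r a : mkq (r *: val (mkq a)) = mkq (r *: a).
Proof. apply: mkqE; rewrite -scalerBr; apply/NZ/mkq_canon. Qed.

Definition qzero : qT := mkq 0.
Definition qopp (x : qT) : qT := mkq (- val x).
Definition qadd (x y : qT) : qT := mkq (val x + val y).
Definition qscale (r : R) (x : qT) : qT := mkq (r *: val x).
Lemma qaddA : associative qadd.
Proof. by move=> x y z; rewrite /qadd mkqDl mkqDr addrA. Qed.
Lemma qaddC : commutative qadd.
Proof. by move=> x y; rewrite /qadd addrC. Qed.
Lemma qadd0 : left_id qzero qadd.
Proof. by move=> x; rewrite /qadd mkqDl add0r valK. Qed.
Lemma qaddN : left_inverse qzero qopp qadd.
Proof. by move=> x; rewrite /qadd /qopp mkqDl addNr. Qed.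
HB.instance Definition _ := GRing.isZmodule.Build qT qaddA qaddC qadd0 qaddN.
Lemma qscaleA a b v : qscale a (qscale b v) = qscale (a * b) v.
Proof. by rewrite /qscale mkqZ scalerA. Qed.
Lemma qscale1 : left_id 1 qscale.
Proof. by move=> x; rewrite /qscale scale1r valK. Qed.
Lemma qscaleDr : right_distributive qscale +%R.
Proof. move=> a x y; change (qscale a (qadd x y) = qadd (qscale a x) (qscale a y)).
by rewrite /qscale /qadd mkqZ !scalerDr mkqDl mkqDr. Qed.
Lemma qscaleDl v : {morph qscale^~ v: a b / a + b}.
Proof. move=> a b; change (qscale (a + b) v = qadd (qscale a v) (qscale b v)).
by rewrite /qscale /qadd mkqDl mkqDr scalerDl. Qed.
HB.instance Definition _ := GRing.Zmodule_isLmodule.Build R qT qscaleA qscale1 qscaleDr qscaleDl.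

Lemma qproj_lin : linear (mkq : Y -> qT).
Proof. move=> a x y; change (mkq (a *: x + y) = qadd (qscale a (mkq x)) (mkq y)).
rewrite /qadd /qscale mkqDl mkqDr; apply: esym; apply: mkqE.
by rewrite opprD addrACA subrr addr0 -scalerBr; apply/NZ/mkq_canon. Qed.
Definition qproj : {linear Y -> qT} := linmk qproj_lin.
Lemma qproj0 y : qproj y = 0 -> N y.
Proof. rewrite linmkE => H; have E : canon y = canon 0 := congr1 val H.
suff -> : y = (y - canon y) + canon 0 by apply: ND; [apply: canonP | apply: canon0].
by rewrite -E subrK. Qed.
Lemma qprojN y : N y -> qproj y = 0.
Proof. move=> Hy; rewrite linmkE; apply: mkqE; by rewrite subr0. Qed.
End Quot.

Section Basics.
Variable R : pzRingType.

Definition tauf (M : lmodType R) (x : M) (v : 'rV[R]_1) : M := v 0 0 *: x.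
Lemma tau_lin (M : lmodType R) (x : M) : linear (tauf x).
Proof. by move=> a u v; rewrite /tauf !mxE scalerDl scalerA. Qed.
Definition tau (M : lmodType R) (x : M) : {linear 'rV[R]_1 -> M} := linmk (tau_lin x).
Definition one1 : 'rV[R]_1 := const_mx 1.
Lemma tau1 (M : lmodType R) (x : M) : tau x one1 = x.
Proof. by rewrite linmkE /tauf mxE scale1r. Qed.
Lemma tau_ext (M : lmodType R) (x y : M) : (forall v, tau x v = tau y v) -> x = y.
Proof. by move=> H; rewrite -(tau1 x) -(tau1 y) H. Qed.

Lemma zero_lin (M N : lmodType R) : linear (fun _ : M => (0 : N)).
Proof. by move=> a u v; rewrite scaler0 addr0. Qed.
Definition zeroL (M N : lmodType R) : {linear M -> N} := linmk (@zero_lin M N).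

Definition genP (Y : lmodType R) (I : Type) (P : I -> Prop) (Xs : I -> lmodType R)
  (fs : forall i, {linear Xs i -> Y}) (y : Y) : Prop :=
  forall S : Y -> Prop, submodule S -> (forall i, P i -> forall x, S (fs i x)) -> S y.

Definition epi_fam (Y : lmodType R) (I : Type) (P : I -> Prop) (Xs : I -> lmodType R)
  (fs : forall i, {linear Xs i -> Y}) : Prop :=
  forall (Z : lmodType R) (u v : {linear Y -> Z}),
    (forall i, P i -> forall x, u (fs i x) = v (fs i x)) -> forall y, u y = v y.

Section Fam.
Variables (Y : lmodType R) (I : Type) (Xs : I -> lmodType R) (fs : forall i, {linear Xs i -> Y}).

Lemma genP_sub (P : I -> Prop) : submodule (genP P fs).
Proof.
split; first by move=> S [] ? _ _.
split.
  move=> x y Hx Hy S HS Hi; case: (HS) => _ [HD _]; apply: HD; [exact: Hx | exact: Hy].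
move=> a x Hx S HS Hi; case: (HS) => _ [_ HZ]; apply: HZ; exact: Hx.
Qed.

Lemma genP_in (P : I -> Prop) i x : P i -> genP P fs (fs i x).
Proof. by move=> Pi S _ H; apply: H. Qed.

Lemma genP_mono (P Q : I -> Prop) y : (forall i, P i -> Q i) -> genP P fs y -> genP Q fs y.
Proof. by move=> PQ Hy S HS H; apply: Hy => // i /PQ; apply: H. Qed.

Lemma epi_gen (P : I -> Prop) : epi_fam P fs -> forall y, genP P fs y.
Proof.
move=> He y; have HN := genP_sub P.
apply: (@qproj0 _ _ _ HN y); have := He _ (qproj HN) (zeroL _ _) => H.
rewrite (H _ y) //= => i Pi x.
by apply: qprojN; apply: genP_in.
Qed.

Lemma gen_epi (P : I -> Prop) : (forall y, genP P fs y) -> epi_fam P fs.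
Proof.
move=> Hg Z u v Huv y; apply: (Hg y (fun y => u y = v y)) => //.
split; first by rewrite !linear0.
split; first by move=> a b Ha Hb; rewrite !linearD Ha Hb.
by move=> a b Hb; rewrite !linearZ Hb.
Qed.

Lemma gen_fin (P : I -> Prop) y : genP P fs y ->
  exists idx : seq I, (forall i, List.In i idx -> P i) /\ genP (fun i => List.In i idx) fs y.
Proof.
move=> Hy; apply: (Hy (fun y => exists idx : seq I, (forall i, List.In i idx -> P i) /\ genP (fun i => List.In i idx) fs y)).
- split; first by exists [::]; split => // S [] ? _ _.
  split.
    move=> a b [i1 [H1 G1]] [i2 [H2 G2]]; exists (i1 ++ i2); split.
      by move=> i Hi; case: (List.in_app_or _ _ _ Hi) => ?; [apply: H1 | apply: H2].
    case: (genP_sub (fun i => List.In i (i1 ++ i2))) => _ [HD _]; apply: HD.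
      by apply: genP_mono G1 => i Hi; apply: List.in_or_app; left.
    by apply: genP_mono G2 => i Hi; apply: List.in_or_app; right.
  move=> a b [i1 [H1 G1]]; exists i1; split => //.
  by case: (genP_sub (fun i => List.In i i1)) => _ [_ HZ]; apply: HZ.
- move=> i Pi x; exists [:: i]; split; first by move=> j [<-|[]].
  by apply: genP_in; left.
Qed.

End Fam.

Definition span (M : lmodType R) (xs : seq M) (y : M) : Prop :=
  forall S : M -> Prop, submodule S -> (forall x, List.In x xs -> S x) -> S y.
Definition fg (M : lmodType R) : Prop := exists xs : seq M, forall y, span xs y.

Definition fgc (X : lmodType R) : Prop :=
  forall (I : Type) (Xs : I -> lmodType R) (fs : forall i, {linear Xs i -> X}),
    epi_fam (fun _ => True) fs -> exists idx : seq I, epi_fam (fun i => List.In i idx) fs.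

Lemma submodule_eq (M N : lmodType R) (f g : {linear M -> N}) : submodule (fun y => f y = g y).
Proof.
split; first by rewrite !linear0.
split; first by move=> a b Ha Hb; rewrite !linearD Ha Hb.
by move=> a b Hb; rewrite !linearZ Hb.
Qed.

Lemma span_lin_eq (M N : lmodType R) (xs : seq M) (f g : {linear M -> N}) :
  (forall y, span xs y) -> (forall x, List.In x xs -> f x = g x) -> forall y, f y = g y.
Proof. move=> Hs Hx y; exact: (Hs y _ (submodule_eq f g)). Qed.

Lemma fg_fgc (X : lmodType R) : fg X -> fgc X.
Proof.
move=> [xs Hxs] I Xs fs He.
have Hg := epi_gen He.
have : exists idx : seq I, forall x, List.In x xs -> genP (fun i => List.In i idx) fs x.
  elim: xs {Hxs} => [|x xs [idx IH]]; first by exists [::].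
  have [idx1 [_ G1]] := gen_fin (Hg x).
  exists (idx1 ++ idx) => z [<-|Hz].
    by apply: genP_mono G1 => i Hi; apply: List.in_or_app; left.
  by apply: genP_mono (IH z Hz) => i Hi; apply: List.in_or_app; right.
move=> [idx Hidx]; exists idx; apply: gen_epi => y.
exact: (Hxs y _ (genP_sub _ _)).
Qed.

Lemma fgc_fg (X : lmodType R) : fgc X -> fg X.
Proof.
move=> H.
have He : epi_fam (fun _ : X => True) (fun x : X => tau x).
  apply: gen_epi => y; rewrite -(tau1 y); exact: genP_in.
have [idx Hi] := H X (fun _ => 'rV[R]_1) (fun x => tau x) He.
exists idx => y S HS Hx.
apply: (epi_gen Hi y HS) => i Ii v; rewrite linmkE /tauf.
by case: HS => _ [_ HZ]; apply: HZ; apply: Hx.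
Qed.

End Basics.

Lemma zeroLE (R : pzRingType) (M N : lmodType R) x : zeroL M N x = 0. Proof. by []. Qed.
Lemma compLE (R : pzRingType) (U V W : lmodType R) (f : {linear V -> W}) (g : {linear U -> V}) x :
  compL f g x = f (g x). Proof. by []. Qed.
Lemma idLE (R : pzRingType) (U : lmodType R) x : idL U x = x. Proof. by []. Qed.

Record Eqv (R S : pzRingType) := MkEqv {
  eF : mod_functor R S; eG : mod_functor S R;
  eH1 : nat_iso_id eF eG; eH2 : nat_iso_id eG eF }.

Definition symE (R S : pzRingType) (E : Eqv R S) : Eqv S R := MkEqv (eH2 E) (eH1 E).

Lemma fmap_ext (R S : pzRingType) (Fn : mod_functor R S) (M N : lmodType R) (f g : {linear M -> N}) :
  f =1 g -> fmap Fn f =1 fmap Fn g.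
Proof.
move=> H x; rewrite (@fmap_comp _ _ Fn _ _ _ g (idL N) f H x) /=.
by rewrite (@fmap_id _ _ Fn _ (idL N) (fun _ => erefl)).
Qed.

Lemma fmap_compE (R S : pzRingType) (Fn : mod_functor R S) (M N P : lmodType R)
  (f : {linear M -> N}) (g : {linear N -> P}) x :
  fmap Fn (compL g f) x = fmap Fn g (fmap Fn f x).
Proof. exact: (@fmap_comp _ _ Fn _ _ _ f g (compL g f) (fun _ => erefl)). Qed.

Lemma fmap_idE (R S : pzRingType) (Fn : mod_functor R S) (M : lmodType R) x :
  fmap Fn (idL M) x = x.
Proof. exact: (@fmap_id _ _ Fn _ (idL M) (fun _ => erefl)). Qed.

Lemma inv_lin (R : pzRingType) (M N : lmodType R) (f : {linear M -> N}) :
  bijective f -> exists g : {linear N -> M}, cancel f g /\ cancel g f.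
Proof.
case=> g fK gK.
have Hg : linear g.
  by move=> a x y; apply: (can_inj fK); rewrite linearP !gK.
by exists (linmk Hg).
Qed.

Section EqvTheory.
Variables (R S : pzRingType) (E : Eqv R S).
Local Notation F := (eF E).
Local Notation G := (eG E).

Lemma faithful (M N : lmodType R) (f g : {linear M -> N}) :
  fmap F f =1 fmap F g -> f =1 g.
Proof.
move=> H x; case: (eH1 E) => eta [Hb Hn].
apply: (bij_inj (Hb N)).
have E1 := Hn _ _ f x; have E2 := Hn _ _ g x; rewrite /= in E1 E2.
rewrite -E1 -E2; exact: fmap_ext H _.
Qed.

End EqvTheory.

Section EqvTheory2.
Variables (R S : pzRingType) (E : Eqv R S).
Local Notation F := (eF E).
Local Notation G := (eG E).

Lemma full (M N : lmodType R) (h : {linear fobj F M -> fobj F N}) :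
  exists f : {linear M -> N}, fmap F f =1 h.
Proof.
case: (eH1 E) => eta [Hb Hn].
have [ei [eK iK]] := inv_lin (Hb N).
exists (compL ei (compL (fmap G h) (eta M))).
apply: (faithful (E := symE E)) => /= y.
have [ej _ jK] := Hb M; rewrite -(jK y).
have := Hn _ _ (compL ei (compL (fmap G h) (eta M))) (ej y) => /= ->.
by rewrite iK.
Qed.

End EqvTheory2.

Section EqvTheory3.
Variables (R S : pzRingType) (E : Eqv R S).
Local Notation F := (eF E).
Local Notation G := (eG E).

Lemma reflect_zero (M N : lmodType R) (f : {linear M -> N}) :
  (forall x, fmap F f x = 0) -> forall x, f x = 0.
Proof.
move=> H x.
have : compL f (zeroL M M) =1 f.
  apply: (faithful (E := E)) => y; rewrite fmap_compE !H //.
by move=> /(_ x) <-; rewrite compLE zeroLE linear0.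
Qed.

Lemma reflect_epi (N : lmodType R) (I : Type) (P : I -> Prop) (Xs : I -> lmodType R)
  (fs : forall i, {linear Xs i -> N}) :
  epi_fam P (fun i => fmap F (fs i)) -> epi_fam P fs.
Proof.
move=> He Z u v Huv y; apply: (faithful (E := E)); apply: He => i Pi x.
rewrite -!fmap_compE; apply: fmap_ext => z /=; exact: Huv.
Qed.

Lemma Fzero_obj (M : lmodType R) : (forall x : M, x = 0) -> forall w : fobj F M, w = 0.
Proof.
move=> H0 w; case: (eH2 E) => eps [Hb Hn].
set W := fobj F M.
have [a Ha] := full (E := E) (compL (eps W) (idL W)).
have [b Hb'] := full (E := E) (compL (eps W) (zeroL W W)).
have ab : a =1 b by move=> x; rewrite (H0 x) !linear0.
apply: (bij_inj (Hb W)).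
by have := Ha w; rewrite (fmap_ext ab) Hb' !compLE zeroLE idLE => <-.
Qed.

Lemma preserve_zero (M N : lmodType R) (f : {linear M -> N}) :
  (forall x, f x = 0) -> forall x, fmap F f x = 0.
Proof.
move=> H x.
pose Z0 := 'rV[R]_0.
have E0 : f =1 compL (zeroL Z0 N) (zeroL M Z0) by move=> y; rewrite H compLE zeroLE.
rewrite (fmap_ext E0) fmap_compE.
rewrite (Fzero_obj (M := Z0) _ (fmap F (zeroL M Z0) x)) ?linear0 //.
by move=> z; rewrite thinmx0.
Qed.

Lemma preserve_epi (N : lmodType R) (I : Type) (P : I -> Prop) (Xs : I -> lmodType R)
  (fs : forall i, {linear Xs i -> N}) :
  epi_fam P fs -> epi_fam P (fun i => fmap F (fs i)).
Proof.
move=> He Z u v Huv y; case: (eH2 E) => eps [Hb Hn].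
have [a Ha] := full (E := E) (compL (eps Z) u).
have [b Hb'] := full (E := E) (compL (eps Z) v).
have ab : a =1 b.
  apply: He => i Pi x.
  suff H : compL a (fs i) =1 compL b (fs i) by exact: H x.
  apply: (faithful (E := E)) => z.
  by rewrite !fmap_compE Ha Hb' !compLE (Huv i Pi).
apply: (bij_inj (Hb Z)).
by have := Ha y; rewrite (fmap_ext ab) Hb' /= => <-.
Qed.

Lemma preserve_iso (M N : lmodType R) : mod_iso M N -> mod_iso (fobj F M) (fobj F N).
Proof.
case=> f Hf; have [g [fK gK]] := inv_lin Hf.
exists (fmap F f); exists (fmap F g) => x.
  by rewrite -fmap_compE (fmap_ext (g := idL M)) ?fmap_idE // => y /=; rewrite fK.
by rewrite -fmap_compE (fmap_ext (g := idL N)) ?fmap_idE // => y /=; rewrite gK.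
Qed.

End EqvTheory3.

Definition epi1 (R : pzRingType) (X Y : lmodType R) (g : {linear X -> Y}) :=
  epi_fam (Xs := fun _ : unit => X) (fun _ => True) (fun _ => g).

Lemma epi_fam_ext (R : pzRingType) (Y : lmodType R) (I : Type) (P : I -> Prop) (Xs : I -> lmodType R)
  (fs gs : forall i, {linear Xs i -> Y}) :
  (forall i x, fs i x = gs i x) -> epi_fam P fs -> epi_fam P gs.
Proof. by move=> H He Z u v Huv; apply: He => i Pi x; rewrite !H; apply: Huv. Qed.

Lemma epi_post (R : pzRingType) (Y Y2 : lmodType R) (I : Type) (P : I -> Prop) (Xs : I -> lmodType R)
  (fs : forall i, {linear Xs i -> Y}) (phi : {linear Y -> Y2}) :
  (forall y2, exists y, phi y = y2) -> epi_fam P fs -> epi_fam P (fun i => compL phi (fs i)).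
Proof.
move=> Hs He Z u v Huv y2; have [y <-] := Hs y2.
exact: (He _ (compL u phi) (compL v phi)).
Qed.

Lemma simple_to_char (R : pzRingType) (M : lmodType R) : simple_module M ->
  forall (X : lmodType R) (g : {linear X -> M}), (forall x, g x = 0) \/ epi1 g.
Proof.
move=> [_ Hs] X g.
have HS : submodule (fun y => exists x, g x = y).
  split; first by exists 0; rewrite linear0.
  split; first by move=> a b [x <-] [y <-]; exists (x + y); rewrite linearD.
  by move=> a b [x <-]; exists (a *: x); rewrite linearZ.
case: (Hs _ HS) => H; [left => x; apply: H; by exists x | right].
apply: gen_epi => y; have [x <-] := H y; exact: genP_in.
Qed.

Lemma char_to_simple (R : pzRingType) (M : lmodType R) : (exists x : M, x <> 0) ->
  (forall (X : lmodType R) (g : {linear X -> M}), (forall x, g x = 0) \/ epi1 g) ->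
  simple_module M.
Proof.
move=> Hnz Hc; split => // Sm HS.
case: (pselect (exists x, Sm x /\ x <> 0)) => [[x [Sx nx]]|Hn]; last first.
  left => x Sx; apply: contrapT => nx; apply: Hn; by exists x.
right => y; case: (Hc _ (tau x)) => [H|He].
  by have := H (one1 R); rewrite tau1 => /nx.
apply: (epi_gen He y HS) => _ _ v; rewrite linmkE /tauf.
by case: HS => _ [_ HZ]; apply: HZ.
Qed.

Section EqvTheory4.
Variables (R S : pzRingType) (E : Eqv R S).
Local Notation F := (eF E).
Local Notation G := (eG E).

Lemma preserve_simple (M : lmodType R) : simple_module M -> simple_module (fobj F M).
Proof.
move=> HM; have Hc := simple_to_char HM.
case: (eH1 E) => eta [Hb Hn].
have [ei [eK iK]] := inv_lin (Hb M).
apply: char_to_simple.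
  apply: contrapT => Hno.
  have Hz : forall w : fobj F M, w = 0.
    by move=> w; apply: contrapT => nw; apply: Hno; exists w.
  have : idL M =1 zeroL M M.
    by apply: (faithful (E := E)) => w; rewrite (Hz (fmap F _ w)) (Hz (fmap F _ w)).
  by case: HM => [[x nx] _] /(_ x).
move=> X g; case: (Hc _ (compL ei (fmap G g))) => [H|He].
  left; apply: (reflect_zero (E := symE E)) => y /=.
  by have := H y; rewrite compLE => /(congr1 (eta M)); rewrite iK linear0.
right; apply: (reflect_epi (E := symE E)) => Z u v Huv y.
rewrite -(iK y).
have := He _ (compL u (eta M)) (compL v (eta M)) => /(_ _ (ei y)).
rewrite !compLE; apply => -[] _ x; rewrite !compLE iK.
exact: Huv.
Qed.

Lemma preserve_fgc (X : lmodType R) : fgc X -> fgc (fobj F X).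
Proof.
move=> HX I Xs fs He.
case: (eH1 E) => eta [Hb Hn].
have [ei [eK iK]] := inv_lin (Hb X).
have He2 := preserve_epi (E := symE E) He.
have He3 := epi_post (phi := ei) (fun y => ex_intro _ (eta X y) (eK y)) He2.
have [idx Hidx] := HX _ _ _ He3.
exists idx; apply: (reflect_epi (E := symE E)).
have := epi_post (phi := eta X) (fun y => ex_intro _ (ei y) (iK y)) Hidx.
by apply: epi_fam_ext => i x; rewrite !compLE iK.
Qed.

Lemma preserve_fg (X : lmodType R) : fg X -> fg (fobj F X).
Proof. by move=> /fg_fgc /preserve_fgc /fgc_fg. Qed.

End EqvTheory4.

Fixpoint tuples (T : Type) (s : seq T) (k : nat) : seq (seq T) :=
  if k is k'.+1 then flatten [seq [seq x :: t | t <- tuples s k'] | x <- s] else [:: [::]].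

Lemma size_tuples (T : Type) (s : seq T) k : size (tuples s k) = (size s ^ k)%N.
Proof.
elim: k => [|k IH] //=; rewrite size_flatten /shape -map_comp.
rewrite (eq_map (g := fun _ => size (tuples s k))); last by move=> x /=; rewrite size_map.
have sc : forall (l : seq T) c, sumn [seq c | _ <- l] = (c * size l)%N.
  by elim => [c|? l IHl c] /=; [rewrite muln0 | rewrite IHl mulnS].
by rewrite IH sc expnS mulnC.
Qed.

Lemma mem_tuples (T : eqType) (s : seq T) (t : seq T) :
  (forall x, x \in t -> x \in s) -> t \in tuples s (size t).
Proof.
elim: t => [|x t IH] H; first by rewrite /= mem_seq1.
apply/flattenP; exists [seq x :: t0 | t0 <- tuples s (size t)].
  by apply/mapP; exists x => //; apply: H; rewrite inE eqxx.
by apply/mapP; exists t => //; apply: IH => y Hy; apply: H; rewrite inE Hy orbT.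
Qed.

Lemma inj_fin (A B : eqType) (a0 : A) (iota : A -> B) (L : seq B) :
  injective iota -> (forall a, iota a \in L) ->
  exists l : seq A, [/\ uniq l, (size l <= size L)%N & forall a, a \in l].
Proof.
move=> Hi HL.
pose pre (b : B) : A := match pselect (exists a, iota a = b) with
  | left H => projT1 (cid H) | right _ => a0 end.
have preK a : pre (iota a) = a.
  rewrite /pre; case: pselect => [H|H]; last by exfalso; apply: H; exists a.
  by case: (cid H) => a' /= /Hi.
exists (undup (map pre L)); split.
- exact: undup_uniq.
- by rewrite (leq_trans (size_undup _)) // size_map.
- by move=> a; rewrite mem_undup -(preK a); apply: map_f.
Qed.

Lemma In_mem (T : eqType) (x : T) s : List.In x s -> x \in s.
Proof. by elim: s => //= y s IH [->|/IH]; rewrite inE ?eqxx // => ->; rewrite orbT. Qed.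

Section EqvTheory5.
Variables (R S : pzRingType) (E : Eqv R S).
Local Notation F := (eF E).
Local Notation G := (eG E).

Lemma fg_rV1 (K : pzRingType) : fg ('rV[K]_1).
Proof.
exists [:: one1 K] => v Sm HS Hx.
have -> : v = v 0 0 *: one1 K.
  by apply/rowP => j; rewrite !mxE (ord1 j) mulr1.
by case: HS => _ [_ HZ]; apply: HZ; apply: Hx; left.
Qed.

Lemma card_bound : exists k, forall (Y : lmodType R) (s : seq Y), (forall y, y \in s) ->
  exists l : seq (fobj F Y), [/\ uniq l, (size l <= size s ^ k)%N & forall w, w \in l].
Proof.
have [ps Hps] := preserve_fg (symE E) (fg_rV1 S).
exists (size ps) => Y s Hs.
case: (eH1 E) => eta [Hb Hn].
pose iota (y : fobj F Y) := [seq fmap G (tau y) p | p <- ps].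
have Hi : injective iota.
  move=> y y' /= Heq; apply: tau_ext => v.
  apply: (faithful (E := symE E)); apply: (span_lin_eq Hps) => p Hp.
  have Hp' := In_mem Hp.
  have := congr1 (fun l => nth 0 l (index p ps)) Heq => /=.
  by rewrite !(nth_map p) ?index_mem // nth_index.
have HL : forall y, iota y \in tuples (map (eta Y) s) (size ps).
  move=> y; have := mem_tuples (s := map (eta Y) s) (t := iota y).
  rewrite size_map; apply => z _.
  have [ej _ jK] := Hb Y; rewrite -(jK z); exact: map_f.
have [l [Hu Hsz Hl]] := inj_fin 0 Hi HL.
by exists l; split => //; rewrite size_tuples size_map in Hsz.
Qed.

End EqvTheory5.

Definition relproj (R : pzRingType) (X : lmodType R) : Prop :=
  forall (A B : lmodType R) (h : {linear A -> B}) (a : {linear X -> B}),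
    (forall (Z : lmodType R) (u v : {linear B -> Z}), (forall x, u (h x) = v (h x)) -> forall x, u (a x) = v (a x)) ->
    exists b : {linear X -> A}, forall x, h (b x) = a x.

Definition exact_at (R : pzRingType) (A B C : lmodType R) (g : {linear C -> A}) (f : {linear A -> B}) : Prop :=
  forall x, f x = 0 <-> exists c, x = g c.

Lemma image_sub (R : pzRingType) (A B : lmodType R) (h : {linear A -> B}) :
  submodule (fun z => exists y, h y = z).
Proof.
split; first by exists 0; rewrite linear0.
split; first by move=> a b [x <-] [y <-]; exists (x + y); rewrite linearD.
by move=> a b [x <-]; exists (a *: x); rewrite linearZ.
Qed.

Lemma comb_lin (K : pzRingType) (A : lmodType K) n (ys : 'I_n -> A) :
  linear (fun v : 'rV[K]_n => \sum_i v 0 i *: ys i).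
Proof.
move=> c u w; rewrite scaler_sumr -big_split /=; apply: eq_bigr => i _.
by rewrite !mxE scalerDl scalerA.
Qed.

Lemma relproj_rV (K : pzRingType) n : relproj ('rV[K]_n).
Proof.
move=> A B h a Hc.
have Him : forall x, exists y, h y = a x.
  move=> x; have HN := image_sub h.
  apply: (@qproj0 _ _ _ HN); rewrite (Hc _ (qproj HN) (zeroL _ _)) // => y.
  by rewrite zeroLE; apply: qprojN; exists y.
have [ys Hys] := fin_all_exists (fun i : 'I_n => Him (delta_mx 0 i)).
exists (linmk (comb_lin ys)) => v; rewrite linmkE linear_sum.
rewrite [in RHS](row_sum_delta v) linear_sum; apply: eq_bigr => i _.
by rewrite linearZ Hys linearZ.
Qed.

Section EqvTheory6.
Variables (R S : pzRingType) (E : Eqv R S).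
Local Notation F := (eF E).
Local Notation G := (eG E).

Lemma preserve_relproj (X : lmodType R) : relproj X -> relproj (fobj F X).
Proof.
move=> HX A B h a Hc.
case: (eH1 E) => eta [Hb Hn].
have [ei [eK iK]] := inv_lin (Hb X).
have Hc2 : forall (Z : lmodType R) (u v : {linear fobj G B -> Z}),
    (forall x, u (fmap G h x) = v (fmap G h x)) ->
    forall x, u (compL (fmap G a) (eta X) x) = v (compL (fmap G a) (eta X) x).
  move=> Z u v Huv x.
  have [u' Hu'] := full (E := symE E) (compL (eta Z) u).
  have [v' Hv'] := full (E := symE E) (compL (eta Z) v).
  have Hh : compL u' h =1 compL v' h.
    have := @faithful _ _ (symE E) _ _ (compL u' h) (compL v' h). apply.
    move=> z /=.
    by rewrite !fmap_compE Hu' Hv' !compLE Huv.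
  have Ha : compL u' a =1 compL v' a by apply: Hc => z; exact: Hh.
  apply: (bij_inj (Hb Z)); rewrite compLE.
  have := Hu' (fmap G a (eta X x)); rewrite compLE => <-.
  have := Hv' (fmap G a (eta X x)); rewrite compLE => <-.
  by rewrite -!fmap_compE; apply: fmap_ext.
have [b Hb2] := HX _ _ _ _ Hc2.
have [b' Hb'] := full (E := symE E) (compL b ei).
exists b'; suff H : compL h b' =1 a by move=> x; exact: H x.
apply: (faithful (E := symE E)) => y /=.
by rewrite fmap_compE Hb' compLE Hb2 compLE iK.
Qed.

Lemma preserve_surj (A B : lmodType R) (f : {linear A -> B}) :
  (forall y, exists x, f x = y) -> forall y, exists x, fmap F f x = y.
Proof.
move=> Hs.
have He : epi1 f by apply: gen_epi => y; have [x <-] := Hs y; exact: genP_in.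
have He2 := preserve_epi (E := E) He.
move=> y; apply: (epi_gen He2 y (image_sub (fmap F f))) => _ _ x.
by exists x.
Qed.

End EqvTheory6.

Section EqvTheory7.
Variables (R S : pzRingType) (E : Eqv R S).
Local Notation F := (eF E).
Local Notation G := (eG E).

Lemma preserve_exact (A B C : lmodType R) (g : {linear C -> A}) (f : {linear A -> B}) :
  exact_at g f -> exact_at (fmap F g) (fmap F f).
Proof.
move=> Hex y; split; last first.
  move=> [c ->]; rewrite -fmap_compE; apply: (preserve_zero (E := E)) => z.
  by rewrite compLE; apply/Hex; exists z.
move=> Hy.
case: (eH1 E) => eta [Hb Hn].
have [ei [eK iK]] := inv_lin (Hb A).
have HP := @preserve_relproj _ _ (symE E) _ (@relproj_rV S 1).
pose a := compL ei (fmap G (tau y)).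
have fa0 : forall p, f (a p) = 0.
  move=> p; apply: (bij_inj (Hb B)); rewrite linear0.
  have := Hn _ _ f (a p); rewrite /= => <-.
  rewrite /a ?compLE iK -fmap_compE.
  apply: (preserve_zero (E := symE E)) => v.
  by rewrite compLE linmkE /tauf linearZ Hy; apply: scaler0.
have [b Hb2] : exists b : {linear fobj G 'rV[S]_1 -> C}, forall x, g (b x) = a x.
  apply: HP => Z u v Huv x.
  by have [c ->] := (Hex (a x)).1 (fa0 x); apply: Huv.
have [b' Hb'] := full (E := symE E) (compL (eta C) b).
have Hfb : compL (fmap F g) b' =1 tau y.
  apply: (faithful (E := symE E)) => p /=.
  rewrite fmap_compE Hb' compLE.
  have := Hn _ _ g (b p); rewrite /= => ->.
  by rewrite Hb2 /a compLE iK.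
exists (b' (one1 S)); by rewrite -[LHS](tau1 y) -(Hfb (one1 S)).
Qed.

End EqvTheory7.

Section FP.
Variable K : pzRingType.

Lemma mem_In (T : eqType) (x : T) s : x \in s -> List.In x s.
Proof. by elim: s => //= y s IH; rewrite inE => /orP [/eqP ->|/IH]; [left|right]. Qed.

Lemma sub_sum (X : lmodType K) (Sm : X -> Prop) (I : Type) (r : seq I) (Fi : I -> X) :
  submodule Sm -> (forall i, Sm (Fi i)) -> Sm (\sum_(i <- r) Fi i).
Proof.
move=> [H0 [HD _]] H; elim: r => [|i r IH]; first by rewrite big_nil.
by rewrite big_cons; apply: HD.
Qed.

Lemma span_sub (X : lmodType K) (xs : seq X) : submodule (span xs).
Proof.
split; first by move=> Sm [] ? _ _.
split.
  move=> x y Hx Hy Sm HS Hi; case: (HS) => _ [HD _]; apply: HD; [exact: Hx | exact: Hy].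
move=> a x Hx Sm HS Hi; case: (HS) => _ [_ HZ]; apply: HZ; exact: Hx.
Qed.

Lemma span_in (X : lmodType K) (xs : seq X) x : List.In x xs -> span xs x.
Proof. by move=> Hx Sm _ H; apply: H. Qed.

Lemma preim_sub (X Y : lmodType K) (phi : {linear X -> Y}) (Sm : Y -> Prop) :
  submodule Sm -> submodule (fun x => Sm (phi x)).
Proof.
move=> [H0 [HD HZ]]; split; first by rewrite linear0.
by split => [a b Ha Hb|a b Hb]; rewrite ?linearD ?linearZ; [apply: HD | apply: HZ].
Qed.

Lemma sum_delta n (X : lmodType K) (w : 'I_n -> X) i :
  \sum_j (delta_mx 0 i : 'rV[K]_n) 0 j *: w j = w i.
Proof.
rewrite (bigD1 i) //= mxE !eqxx scale1r big1 ?addr0 // => j nji.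
by rewrite mxE eqxx (negbTE nji) scale0r.
Qed.

Definition combL n (X : lmodType K) (w : 'I_n -> X) : {linear 'rV[K]_n -> X} :=
  linmk (comb_lin w).

Lemma combL_delta n (X : lmodType K) (w : 'I_n -> X) i : combL w (delta_mx 0 i) = w i.
Proof. by rewrite linmkE sum_delta. Qed.

Lemma span_rV n : forall v : 'rV[K]_n, span [seq delta_mx 0 i | i <- enum 'I_n] v.
Proof.
move=> v Sm HS H; rewrite (row_sum_delta v); apply: sub_sum => // i.
case: HS => _ [_ HZ]; apply: HZ; apply: H; apply: mem_In.
by apply: map_f; rewrite mem_enum.
Qed.

Lemma fg_rV n : fg ('rV[K]_n).
Proof. by exists [seq delta_mx 0 i | i <- enum 'I_n]; apply: span_rV. Qed.

Lemma fp_helper (C : lmodType K) n (f1 : {linear 'rV[K]_n -> C}) (rels : seq 'rV[K]_n) :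
  (forall z, exists x, f1 x = z) -> (forall v, f1 v = 0 <-> span rels v) ->
  finitely_presented C.
Proof.
move=> Hs Hk.
pose g1 := combL (fun j : 'I_(size rels) => rels`_j).
exists n, (size rels), f1, g1; split => // x; split.
  move=> /Hk Hx; have : exists y, g1 y = x.
    apply: (Hx _ (image_sub g1)) => r Hr; have Hr' := In_mem Hr.
    have Hi : (index r rels < size rels)%N by rewrite index_mem.
    exists (delta_mx 0 (Ordinal Hi)).
    by rewrite combL_delta /= nth_index.
  by case=> y <-; exists y.
move=> [z ->]; rewrite linmkE linear_sum big1 // => j _.
rewrite linearZ (proj2 (Hk _)); first by apply: scaler0.
by apply: span_in; apply: mem_In; apply: mem_nth.
Qed.

Lemma fp_of_exact (A B C : lmodType K) (g : {linear A -> B}) (f : {linear B -> C}) :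
  exact_at g f -> (forall z, exists x, f x = z) -> fg A -> fg B -> relproj B ->
  finitely_presented C.
Proof.
move=> Hex Hf [as_ Has] [bs Hbs] HB.
pose l := size bs.
pose pi := combL (fun i : 'I_l => bs`_i).
have Hpi : forall y, exists x, pi x = y.
  move=> y; apply: (Hbs y _ (image_sub pi)) => b Hb; have Hb' := In_mem Hb.
  have Hi : (index b bs < l)%N by rewrite index_mem.
  exists (delta_mx 0 (Ordinal Hi)).
  by rewrite combL_delta /= nth_index.
have [s Hs] : exists s : {linear B -> 'rV[K]_l}, forall y, pi (s y) = idL B y.
  apply: HB => Z u v Huv y; rewrite idLE; have [x <-] := Hpi y; exact: Huv.
pose rels := [seq s (g x) | x <- as_] ++ [seq (delta_mx 0 i - s (pi (delta_mx 0 i))) | i <- enum 'I_l].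
apply: (fp_helper (f1 := compL f pi) (rels := rels)).
  move=> z; have [y <-] := Hf z; have [x <-] := Hpi y; by exists x.
move=> v; split.
  rewrite compLE => Hv.
  have [c Hc] := (Hex (pi v)).1 Hv.
  have -> : v = s (g c) + (v - s (pi v)) by rewrite Hc addrC subrK.
  case: (span_sub rels) => _ [HD _]; apply: HD.
    apply: (Has c _ (preim_sub (compL s g) (span_sub rels))) => x Hx.
    apply: span_in; apply: List.in_or_app; left; apply: mem_In; apply: map_f; exact: In_mem.
  have Hl : linear (fun w : 'rV[K]_l => w - s (pi w)).
    move=> a u w; have -> : s (pi (a *: u + w)) = a *: s (pi u) + s (pi w) by rewrite !linearP.
    by rewrite scalerBr opprD addrACA.
  apply: (span_rV v (preim_sub (linmk Hl) (span_sub rels))) => w Hw.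
  rewrite linmkE; apply: span_in; apply: List.in_or_app; right.
  have [i _ ->] : exists2 i, i \in enum 'I_l & w = delta_mx 0 i by apply/mapP; exact: In_mem.
  by apply: mem_In; apply: map_f; rewrite mem_enum.
move=> Hv; apply: (Hv _ (submodule_eq (compL f pi) (zeroL _ _))) => r Hr0; case: (List.in_app_or _ _ _ Hr0) => Hr.
  have [x _ ->] : exists2 x, x \in as_ & r = s (g x) by apply/mapP; exact: In_mem.
  by rewrite compLE Hs idLE zeroLE; apply/Hex; exists x.
have [i _ ->] : exists2 i, i \in enum 'I_l & r = delta_mx 0 i - s (pi (delta_mx 0 i)) by apply/mapP; exact: In_mem.
by rewrite compLE zeroLE linearB Hs idLE subrr linear0.
Qed.

Lemma fp_iso (C D : lmodType K) (phi : {linear C -> D}) :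
  bijective phi -> finitely_presented C -> finitely_presented D.
Proof.
move=> Hb [n [m [f [g [Hs Hk]]]]].
exists n, m, (compL phi f), g; split.
  move=> y; case: Hb => psi K1 K2; have [x Hx] := Hs (psi y); exists x.
  by rewrite compLE Hx K2.
move=> x; rewrite compLE -Hk; split; last by move=> ->; rewrite linear0.
by move=> H; apply: (bij_inj Hb); rewrite H linear0.
Qed.

End FP.

Lemma iso_trans (K : pzRingType) (A B C : lmodType K) :
  mod_iso A B -> mod_iso B C -> mod_iso A C.
Proof.
move=> [f Hf] [g Hg]; exists (compL g f).
exact: (bij_comp Hg Hf).
Qed.

Lemma collect (K : pzRingType) (Hc : forall n : nat, (0 < n)%N ->
     exists (k : nat) (Ms : nat -> lmodType K),
       forall M : lmodType K, simple_module M -> has_card M n ->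
         exists i, (i < k)%N /\ mod_iso M (Ms i)) N :
  exists (k : nat) (Ms : nat -> lmodType K),
    forall M : lmodType K, simple_module M -> forall c, (0 < c)%N -> (c <= N)%N -> has_card M c ->
      exists i, (i < k)%N /\ mod_iso M (Ms i).
Proof.
elim: N => [|N [k1 [Ms1 IH]]].
  by exists 0%N, (fun _ => 'rV[K]_0) => M _ c c0 cN; move: c0; rewrite leqn0 in cN; rewrite (eqP cN).
have [k2 [Ms2 H2]] := Hc N.+1 isT.
exists (k1 + k2)%N, (fun i => if (i < k1)%N then Ms1 i else Ms2 (i - k1)%N).
move=> M HM c c0; rewrite leq_eqVlt => /orP [/eqP ->|cN] Hcard.
  have [i [Hi Hiso]] := H2 M HM Hcard.
  exists (k1 + i)%N; split; first by rewrite ltn_add2l.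
  by rewrite ltnNge leq_addr /= addKn.
have [i [Hi Hiso]] := IH M HM c c0 cN Hcard.
exists i; split; first by rewrite (leq_trans Hi) // leq_addr.
by rewrite Hi.
Qed.

Theorem proposition2p1 (R R' : pzRingType) :
  left_arithmetical R -> morita_equivalent R R' -> left_arithmetical R'.
Proof.
move=> [Ha [Hb Hc]] [F0 [G0 [H1 H2]]].
pose E := MkEqv H1 H2.
have Hsimp : forall M' : lmodType R', simple_module M' -> simple_module (fobj (eG E) M').
  by move=> M' HM; exact: (preserve_simple (symE E) HM).
have Heps : forall M' : lmodType R', exists ei : {linear fobj (eF E) (fobj (eG E) M') -> M'}, bijective ei.
  move=> M'; case: (eH2 E) => eps [Hb2 _].
  have [ei [eK iK]] := inv_lin (Hb2 M').
  by exists ei; exists (eps M').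
have [k Hk] := card_bound E.
have [k' Hk'] := card_bound (symE E).
split; [|split].
- move=> M' HM'.
  have [s Hs] := Ha _ (Hsimp _ HM').
  have [l [_ _ Hl]] := Hk _ s Hs.
  have [ei [ej _ jK]] := Heps M'.
  exists (map ei l) => x; rewrite -(jK x); exact: map_f.
- move=> M' HM'.
  have [n [m [f [g [Hs Hker]]]]] := Hb _ (Hsimp _ HM').
  have [ei Hei] := Heps M'.
  apply: (fp_iso Hei).
  apply: (fp_of_exact (g := fmap (eF E) g) (f := fmap (eF E) f)).
  + exact: (preserve_exact (E := E) Hker).
  + exact: (preserve_surj (E := E) Hs).
  + exact: (preserve_fg E (fg_rV R m)).
  + exact: (preserve_fg E (fg_rV R n)).
  + exact (@preserve_relproj _ _ E _ (@relproj_rV R n)).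
- move=> n n0.
  have [K [Ms HMs]] := collect Hc (n ^ k').
  exists K, (fun i => fobj (eF E) (Ms i)) => M' HM' [s [Hu [Hsz Hs]]].
  have [l [Hul Hszl Hl]] := Hk' _ s Hs.
  have HG := Hsimp _ HM'.
  have Hl0 : (0 < size l)%N.
    by case: l Hul Hszl Hl => // _ _ /(_ 0).
  have Hle : (size l <= n ^ k')%N by rewrite -Hsz.
  have [i [Hi Hiso]] := HMs _ HG (size l) Hl0 Hle (ex_intro _ l (conj Hul (conj erefl Hl))).
  exists i; split => //.
  apply: iso_trans (preserve_iso E Hiso).
  case: (eH2 E) => eps [Hb2 _]; by exists (eps M').
Qed.
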